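(* Consider the fully discrete scheme described in the context. Any solution of the scheme satisfies, for every $\Delta t>0$, the discrete energy law $$\frac{\tilde F^{n+1}-\tilde F^n}{\Delta t}=-\Delta x\Delta y\Big[\sum_{i=0}^{N_x}\sum_{j=1}^{N_y}\big(A_x(\psi\bar M^{n+\frac12})\,|D_x(\chi\mu_*^{n+\frac12})|^2\big)_{i+\frac12,j}+\sum_{i=1}^{N_x}\sum_{j=0}^{N_y}\big(A_y(\psi\bar M^{n+\frac12})\,|D_y(\chi\mu_*^{n+\frac12})|^2\big)_{i,j+\frac12}\Big]$$ $$-\Delta x\Delta y\sum_{i=1}^{N_x}\sum_{j=1}^{N_y}\tfrac12\Gamma^{-1}\Big\{|D_x\psi|_{i-\frac12,j}\big(A_x\tfrac{\tilde\phi^{n+1}-\tilde\phi^n}{\Delta t}\big)^2_{i-\frac12,j}+|D_x\psi|_{i+\frac12,j}\big(A_x\tfrac{\tilde\phi^{n+1}-\tilde\phi^n}{\Delta t}\big)^2_{i+\frac12,j}+|D_y\psi|_{i,j-\frac12}\big(A_y\tfrac{\tilde\phi^{n+1}-\tilde\phi^n}{\Delta t}\big)^2_{i,j-\frac12}+|D_y\psi|_{i,j+\frac12}\big(A_y\tfrac{\tilde\phi^{n+1}-\tilde\phi^n}{\Delta t}\big)^2_{i,j+\frac12}\Big\}$$ $$-\Delta x\Delta y\sum_{i=1}^{N_x}\sum_{j=1}^{N_y}\mu^{n+\frac12}_{*,i,j}\,\chi_{i,j}\,\mathcal B(h_3)_{i,j},$$ where the discrete energy is $$\tilde F^n=\Delta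 x\Delta y\sum_{i=1}^{N_x}\sum_{j=1}^{N_y}\Big\{\tfrac12\psi_{i,j}|q^n_{i,j}|^2+\tfrac12K\big[(A_x\psi)_{i+\frac12,j}(D_x\tilde\phi^n)^2_{i+\frac12,j}+(A_y\psi)_{i,j+\frac12}(D_y\tilde\phi^n)^2_{i,j+\frac12}\big]+\mathcal B\big(\tfrac12\alpha(\tilde\phi^n-h_1)^2\big)^{\sharp}_{i,j}\Big\},$$ with $\mathcal B(\cdot)^{\sharp}$ defined in the context. Therefore the scheme is unconditionally energy stable: in particular, when $h_3\equiv0$, $\tilde F^{n+1}\le\tilde F^n$ for every $\Delta t>0$.
   Context: Domain and grid: $\Omega=[-\tfrac12L_x,\tfrac12L_x]\times[-\tfrac12L_y,\tfrac12L_y]$ is divided into $N_x\times N_y$ uniform cells with $\Delta x=L_x/N_x$, $\Delta y=L_y/N_y$; grid functions $u_{i,j}$ live at cell centers $i=1,\dots,N_x$, $j=1,\dots,N_y$, with ghost indices $i=0,N_x+1$, $j=0,N_y+1$. For a cell-centered $u$ define face quantities $(A_xu)_{i+\frac12,j}=\tfrac12(u_{i+1,j}+u_{i,j})$, $(D_xu)_{i+\frac12,j}=(u_{i+1,j}-u_{i,j})/\Delta x$ ($i=0,\dots,N_x$), and analogously $(A_yu)_{i,j+\frac12}$, $(D_yu)_{i,j+\frac12}$; for a face function $w$, $(D_xw)_{i,j}=(w_{i+\frac12,j}-w_{i-\frac12,j})/\Delta x$, $(D_yw)_{i,j}=(w_{i,j+\frac12}-w_{i,j-\frac12})/\Delta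 y$. Set $D_h(a,u)_{i,j}=D_x(A_xa\,D_xu)_{i,j}+D_y(A_ya\,D_yu)_{i,j}$. Given data: a grid function $\psi>0$ (discrete approximation of the characteristic function of the original domain $\Omega_1\subset\Omega$) with $\chi=1/\psi$; constants $K>0$, $\alpha\ge0$, $\Gamma>0$, $\Delta t>0$; a positive mobility grid function $\bar M^{n+\frac12}$; time-independent grid functions $h_1,h_2,h_3$; $g(\phi)=f'(\phi)/\sqrt{2f(\phi)+2A}$ for a bulk potential $f$ and constant $A$ with $2f+2A>0$, and $\bar g^{n+\frac12}_{i,j}$ denotes $g$ evaluated at $\tfrac32\tilde\phi^n_{i,j}-\tfrac12\tilde\phi^{n-1}_{i,j}$ ($n\ge1$) or at $\tilde\phi^0_{i,j}$ ($n=0$). Notation $u^{n+\frac12}=\tfrac12(u^{n+1}+u^n)$. For a cell-centered $w$ define $\mathcal B(w)_{i,j}=\tfrac12\big[|D_x\psi|_{i-\frac12,j}(A_xw)_{i-\frac12,j}+|D_x\psi|_{i+\frac12,j}(A_xw)_{i+\frac12,j}+|D_y\psi|_{i,j-\frac12}(A_yw)_{i,j-\frac12}+|D_y\psi|_{i,j+\frac12}(A_yw)_{i,j+\frac12}\big]$, and define the boundary energy density $\mathcal B(\cdot)^{\sharp}_{i,j}=\tfrac12\sum_{e}|D\psi|_e\big[\tfrac12\alpha\big((A\tilde\phi^n)_e-(Ah_1)_e\big)^2-(Ah_2)_e(A\tilde\phi^n)_e\big]$, where $e$ runs over the four faces $(i\pm\frac12,j)$, $(i,j\pm\frac12)$ of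 cell $(i,j)$, with $|D\psi|_e$, $A$ meaning $|D_x\psi|$, $A_x$ on $x$-faces and $|D_y\psi|$, $A_y$ on $y$-faces. The scheme: given $\tilde\phi^n,q^n$, find $\tilde\phi^{n+1},q^{n+1},\mu_*^{n+\frac12}$ with, at every cell $(i,j)$, (1) $\frac{\tilde\phi^{n+1}-\tilde\phi^n}{\Delta t}=\chi\,D_h(\psi\bar M^{n+\frac12},\chi\mu_*^{n+\frac12})-\chi\,\mathcal B(h_3)$; (2) $\mu_*^{n+\frac12}=\psi\,\bar g^{n+\frac12}q^{n+\frac12}-K\,D_h(\psi,\tilde\phi^{n+\frac12})+\mathcal B\big(\alpha(\tilde\phi^{n+\frac12}-h_1)-h_2+\Gamma^{-1}\frac{\tilde\phi^{n+1}-\tilde\phi^n}{\Delta t}\big)$; (3) $q^{n+1}-q^n=\bar g^{n+\frac12}(\tilde\phi^{n+1}-\tilde\phi^n)$. Boundary conditions (discrete homogeneous Neumann): the ghost values of $\tilde\phi^{n},\tilde\phi^{n+1}$, of $\psi$ (hence of $\chi$), and of $\mu_*^{n+\frac12}$ equal the adjacent interior values, e.g. $u_{0,j}=u_{1,j}$, $u_{N_x+1,j}=u_{N_x,j}$, $u_{i,0}=u_{i,1}$, $u_{i,N_y+1}=u_{i,N_y}$. *)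

(* Defs.v *)
From HB Require Import structures.
From mathcomp Require Import all_boot all_order all_algebra.
From mathcomp Require Import all_classical all_reals all_analysis.
Set Implicit Arguments. Unset Strict Implicit. Unset Printing Implicit Defensive.
Import Order.TTheory GRing.Theory Num.Theory.
Local Open Scope ring_scope.

(* Grid functions: u i j with i = 0..Nx+1, j = 0..Ny+1 (0 and N+1 are ghosts).
   Face functions: the x-face (i+1/2, j) is stored at index (i, j),
   the y-face (i, j+1/2) is stored at index (i, j). *)
Definition grid (R : realType) := nat -> nat -> R.

Section Grid.
Context {R : realType}.
Implicit Types (u w a psi : grid R) (dx dy : R).

Definition Ax u : grid R := fun i j => (u i.+1 j + u i j) / 2.
Definition Ay u : grid R := fun i j => (u i j.+1 + u i j) / 2.
Definition Dx dx u : grid R := fun i j => (u i.+1 j - u i j) / dx.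
Definition Dy dy u : grid R := fun i j => (u i j.+1 - u i j) / dy.
(* divergence-type differences of face functions, evaluated at cell (i,j), i,j >= 1 *)
Definition Dxf dx (w : grid R) : grid R := fun i j => (w i j - w i.-1 j) / dx.
Definition Dyf dy (w : grid R) : grid R := fun i j => (w i j - w i j.-1) / dy.

Definition Dh dx dy a u : grid R := fun i j =>
  Dxf dx (fun k l => Ax a k l * Dx dx u k l) i j
  + Dyf dy (fun k l => Ay a k l * Dy dy u k l) i j.

Definition Bop dx dy psi w : grid R := fun i j =>
  (`|Dx dx psi i.-1 j| * Ax w i.-1 j + `|Dx dx psi i j| * Ax w i j
   + `|Dy dy psi i j.-1| * Ay w i j.-1 + `|Dy dy psi i j| * Ay w i j) / 2.

Definition bdens (alpha : R) (Aphi Ah1 Ah2 : R) : R :=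
  alpha / 2 * (Aphi - Ah1) ^+ 2 - Ah2 * Aphi.
Definition Bsharp dx dy psi (alpha : R) h1 h2 phi : grid R := fun i j =>
  (`|Dx dx psi i.-1 j| * bdens alpha (Ax phi i.-1 j) (Ax h1 i.-1 j) (Ax h2 i.-1 j)
   + `|Dx dx psi i j| * bdens alpha (Ax phi i j) (Ax h1 i j) (Ax h2 i j)
   + `|Dy dy psi i j.-1| * bdens alpha (Ay phi i j.-1) (Ay h1 i j.-1) (Ay h2 i j.-1)
   + `|Dy dy psi i j| * bdens alpha (Ay phi i j) (Ay h1 i j) (Ay h2 i j)) / 2.

Definition energy (Nx Ny : nat) dx dy psi (K alpha : R) h1 h2 (phi q : grid R) : R :=
  dx * dy * \sum_(1 <= i < Nx.+1) \sum_(1 <= j < Ny.+1)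
    (psi i j * (q i j) ^+ 2 / 2
     + K / 2 * (Ax psi i j * (Dx dx phi i j) ^+ 2 + Ay psi i j * (Dy dy phi i j) ^+ 2)
     + Bsharp dx dy psi alpha h1 h2 phi i j).

Definition gfun (f : R -> R) (A : R) (x : R) : R :=
  derive1 f x / Num.sqrt (2 * f x + 2 * A).

Definition gbar (f : R -> R) (A : R) (phi : nat -> grid R) (n : nat) : grid R :=
  fun i j => match n with
             | 0 => gfun f A (phi 0%N i j)
             | m.+1 => gfun f A (3 / 2 * phi m.+1 i j - 1 / 2 * phi m i j)
             end.

Definition neumann (Nx Ny : nat) (u : grid R) : Prop :=
  (forall j, u 0%N j = u 1%N j) /\ (forall j, u Nx.+1 j = u Nx j) /\
  (forall i, u i 0%N = u i 1%N) /\ (forall i, u i Ny.+1 = u i Ny).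

End Grid.

(* Main.v *)
Require Import Defs.
From HB Require Import structures.
From mathcomp Require Import all_boot all_order all_algebra.
From mathcomp Require Import all_classical all_reals all_analysis.
From mathcomp Require Import ring lra.
Import Order.TTheory GRing.Theory Num.Theory.
Local Open Scope ring_scope.

Definition Tsum {R : realType} (Nx Ny : nat) (g : grid R) : R :=
  \sum_(1 <= i < Nx.+1) \sum_(1 <= j < Ny.+1) g i j.

Lemma T_ext {R : realType} Nx Ny (g1 g2 : grid R) :
  (forall i j, (1 <= i <= Nx)%N -> (1 <= j <= Ny)%N -> g1 i j = g2 i j) ->
  Tsum Nx Ny g1 = Tsum Nx Ny g2.
Proof. move=> h; apply: eq_big_nat => i hi; apply: eq_big_nat => j hj; exact: h. Qed.

Lemma TD {R : realType} Nx Ny (g1 g2 : grid R) :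
  Tsum Nx Ny (fun i j => g1 i j + g2 i j) = Tsum Nx Ny g1 + Tsum Nx Ny g2.
Proof. rewrite /Tsum -big_split; apply: eq_bigr => i _; exact: big_split. Qed.

Lemma TB {R : realType} Nx Ny (g1 g2 : grid R) :
  Tsum Nx Ny (fun i j => g1 i j - g2 i j) = Tsum Nx Ny g1 - Tsum Nx Ny g2.
Proof. rewrite /Tsum -sumrB; apply: eq_bigr => i _; exact: sumrB. Qed.

Lemma TZ {R : realType} Nx Ny (c : R) (g : grid R) :
  Tsum Nx Ny (fun i j => c * g i j) = c * Tsum Nx Ny g.
Proof. rewrite /Tsum mulr_sumr; apply: eq_bigr => i _; by rewrite mulr_sumr. Qed.

Lemma tel {R : realType} (N : nat) (U : nat -> R) :
  \sum_(1 <= i < N.+1) (U i - U i.-1) = U N - U 0%N.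
Proof.
elim: N => [|N IH]; first by rewrite big_geq // subrr.
rewrite big_nat_recr //= IH; ring.
Qed.

Lemma tel2 {R : realType} Nx Ny (F Ux Uy : grid R) :
  (forall i j, (0 < i)%N -> (0 < j)%N -> F i j = (Ux i j - Ux i.-1 j) + (Uy i j - Uy i j.-1)) ->
  (forall j, Ux 0%N j = 0) -> (forall j, Ux Nx j = 0) ->
  (forall i, Uy i 0%N = 0) -> (forall i, Uy i Ny = 0) ->
  Tsum Nx Ny F = 0.
Proof.
move=> hF a b c d.
rewrite (@T_ext _ Nx Ny F (fun i j => (Ux i j - Ux i.-1 j) + (Uy i j - Uy i j.-1))); last first.
  by move=> i j /andP[hi _] /andP[hj _]; apply: hF.
rewrite TD.
have -> : Tsum Nx Ny (fun i j => Uy i j - Uy i j.-1) = 0.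
  rewrite /Tsum big1 // => i _; by rewrite tel c d subrr.
rewrite addr0 /Tsum.
under eq_bigr => i _ do rewrite sumrB.
have := tel Nx (fun i => \sum_(1 <= j < Ny.+1) Ux i j) => /= ->.
by rewrite !big1 ?subrr // => j _; rewrite ?a ?b.
Qed.

Lemma nb {R : realType} Nx Ny dx dy (u : grid R) : neumann Nx Ny u ->
  (forall j, Dx dx u 0%N j = 0) /\ (forall j, Dx dx u Nx j = 0) /\
  (forall i, Dy dy u i 0%N = 0) /\ (forall i, Dy dy u i Ny = 0).
Proof.
case=> [a [b [c d]]]; rewrite /Dx /Dy.
split; [|split; [|split]] => k; by rewrite ?a ?b ?c ?d subrr mul0r.
Qed.

Lemma neumann_map2 {R : realType} Nx Ny (F : R -> R -> R) (u v : grid R) :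
  neumann Nx Ny u -> neumann Nx Ny v -> neumann Nx Ny (fun i j => F (u i j) (v i j)).
Proof.
case=> [a [b [c d]]] [a' [b' [c' d']]].
split; [|split; [|split]] => k; by rewrite ?a ?b ?c ?d ?a' ?b' ?c' ?d'.
Qed.

Lemma sbp {R : realType} Nx Ny dx dy (a u v : grid R) :
  (forall j, Dx dx u 0%N j = 0) -> (forall j, Dx dx u Nx j = 0) ->
  (forall i, Dy dy u i 0%N = 0) -> (forall i, Dy dy u i Ny = 0) ->
  Tsum Nx Ny (fun i j => Dh dx dy a u i j * v i j) =
  - Tsum Nx Ny (fun i j => Ax a i j * Dx dx u i j * Dx dx v i j
                         + Ay a i j * Dy dy u i j * Dy dy v i j).
Proof.
move=> h0 hN k0 kN; apply/eqP; rewrite -subr_eq0 opprK -TD; apply/eqP.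
apply: (@tel2 _ Nx Ny _ (fun i j => Ax a i j * Dx dx u i j * v i.+1 j / dx)
             (fun i j => Ay a i j * Dy dy u i j * v i j.+1 / dy)).
- move=> [|i] [|j] // _ _ /=; rewrite /Dh /Dxf /Dyf /Dx /Dy /=; ring.
- by move=> j /=; rewrite h0; ring.
- by move=> j /=; rewrite hN; ring.
- by move=> i /=; rewrite k0; ring.
- by move=> i /=; rewrite kN; ring.
Qed.

Definition rdf {R : realType} dx dy (psi w v : grid R) : grid R := fun i j =>
  (`|Dx dx psi i.-1 j| * (Ax w i.-1 j * Ax v i.-1 j) + `|Dx dx psi i j| * (Ax w i j * Ax v i j)
   + `|Dy dy psi i j.-1| * (Ay w i j.-1 * Ay v i j.-1) + `|Dy dy psi i j| * (Ay w i j * Ay v i j)) / 2.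

Lemma rd {R : realType} Nx Ny dx dy (psi w v : grid R) :
  (forall j, Dx dx psi 0%N j = 0) -> (forall j, Dx dx psi Nx j = 0) ->
  (forall i, Dy dy psi i 0%N = 0) -> (forall i, Dy dy psi i Ny = 0) ->
  Tsum Nx Ny (fun i j => Bop dx dy psi w i j * v i j) = Tsum Nx Ny (rdf dx dy psi w v).
Proof.
move=> h0 hN k0 kN; apply/eqP; rewrite -subr_eq0 -TB; apply/eqP.
apply: (@tel2 _ Nx Ny _ (fun i j => - `|Dx dx psi i j| * Ax w i j * (v i.+1 j - v i j) / 4)
             (fun i j => - `|Dy dy psi i j| * Ay w i j * (v i j.+1 - v i j) / 4)).
- move=> [|i] [|j] // _ _ /=; rewrite /Bop /rdf /Ax /Ay /=; by field.
- by move=> j /=; rewrite h0 normr0; ring.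
- by move=> j /=; rewrite hN normr0; ring.
- by move=> i /=; rewrite k0 normr0; ring.
- by move=> i /=; rewrite kN normr0; ring.
Qed.

Lemma BopD {R : realType} dx dy (psi u v : grid R) i j :
  Bop dx dy psi (fun k l => u k l + v k l) i j = Bop dx dy psi u i j + Bop dx dy psi v i j.
Proof. rewrite /Bop /Ax /Ay; ring. Qed.

Theorem theorem2 (R : realType) (Nx Ny : nat) (Lx Ly : R)
  (psi : grid R) (K alpha Gamma dt Acst : R) (f : R -> R)
  (h1 h2 h3 : grid R) (Mbar : grid R)
  (phi q : nat -> grid R) (mu : grid R) (n : nat) :
  (0 < Nx)%N -> (0 < Ny)%N -> 0 < Lx -> 0 < Ly ->
  let dx := Lx / Nx%:R in let dy := Ly / Ny%:R in
  let chi : grid R := fun i j => 1 / psi i j in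
  (forall i j, 0 < psi i j) ->
  0 < K -> 0 <= alpha -> 0 < Gamma -> 0 < dt ->
  (forall x, derivable f x 1) -> (forall x, 0 < 2 * f x + 2 * Acst) ->
  (forall i j, 0 < Mbar i j) ->
  let gb := gbar f Acst phi n in
  let dphi : grid R := fun i j => (phi n.+1 i j - phi n i j) / dt in
  let phih : grid R := fun i j => (phi n.+1 i j + phi n i j) / 2 in
  let qh : grid R := fun i j => (q n.+1 i j + q n i j) / 2 in
  let psiM : grid R := fun i j => psi i j * Mbar i j in
  let chimu : grid R := fun i j => chi i j * mu i j in
  (* scheme (1)-(3) at every cell *)
  (forall i j, (1 <= i <= Nx)%N -> (1 <= j <= Ny)%N ->
     dphi i j = chi i j * Dh dx dy psiM chimu i j - chi i j * Bop dx dy psi h3 i j) ->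
  (forall i j, (1 <= i <= Nx)%N -> (1 <= j <= Ny)%N ->
     mu i j = psi i j * gb i j * qh i j - K * Dh dx dy psi phih i j
              + Bop dx dy psi (fun k l => alpha * (phih k l - h1 k l) - h2 k l
                                          + Gamma^-1 * dphi k l) i j) ->
  (forall i j, (1 <= i <= Nx)%N -> (1 <= j <= Ny)%N ->
     q n.+1 i j - q n i j = gb i j * (phi n.+1 i j - phi n i j)) ->
  (* discrete homogeneous Neumann boundary conditions *)
  neumann Nx Ny (phi n) -> neumann Nx Ny (phi n.+1) -> neumann Nx Ny psi ->
  neumann Nx Ny mu ->
  let F m := energy Nx Ny dx dy psi K alpha h1 h2 (phi m) (q m) in
  ((F n.+1 - F n) / dt =
     - (dx * dy) * (\sum_(0 <= i < Nx.+1) \sum_(1 <= j < Ny.+1)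
                       Ax psiM i j * (Dx dx chimu i j) ^+ 2
                    + \sum_(1 <= i < Nx.+1) \sum_(0 <= j < Ny.+1)
                       Ay psiM i j * (Dy dy chimu i j) ^+ 2)
     - (dx * dy) * (\sum_(1 <= i < Nx.+1) \sum_(1 <= j < Ny.+1)
          (Gamma^-1 / 2 *
            (`|Dx dx psi i.-1 j| * (Ax dphi i.-1 j) ^+ 2
             + `|Dx dx psi i j| * (Ax dphi i j) ^+ 2
             + `|Dy dy psi i j.-1| * (Ay dphi i j.-1) ^+ 2
             + `|Dy dy psi i j| * (Ay dphi i j) ^+ 2)))
     - (dx * dy) * (\sum_(1 <= i < Nx.+1) \sum_(1 <= j < Ny.+1)
          mu i j * chi i j * Bop dx dy psi h3 i j))
  /\ ((forall i j, h3 i j = 0) -> F n.+1 <= F n).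
Proof.
move=> hNx hNy hLx hLy dx dy chi hpsi hK ha hG hdt hf hfA hM gb dphi phih qh psiM chimu
  H1 H2 H3 Np0 Np1 Npsi Nmu F.
have dt0 : dt != 0 by apply/eqP => e; rewrite e ltxx in hdt.
have dxp : 0 < dx by rewrite divr_gt0 // ltr0n.
have dyp : 0 < dy by rewrite divr_gt0 // ltr0n.
have dx0 : dx != 0 by apply/eqP => e; rewrite e ltxx in dxp.
have dy0 : dy != 0 by apply/eqP => e; rewrite e ltxx in dyp.
have Nph : neumann Nx Ny phih :=
  neumann_map2 Nx Ny (fun a b => (a + b) / 2) _ _ Np1 Np0.
have Ncm : neumann Nx Ny chimu :=
  neumann_map2 Nx Ny (fun a b => 1 / a * b) _ _ Npsi Nmu.
have [p0 [pN [p0' pN']]] := nb Nx Ny dx dy _ Npsi.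
have [f0 [fN [f0' fN']]] := nb Nx Ny dx dy _ Nph.
have [c0 [cN [c0' cN']]] := nb Nx Ny dx dy _ Ncm.
pose wB : grid R := fun k l => alpha * (phih k l - h1 k l) - h2 k l.
pose Gd : grid R := fun k l => Gamma^-1 * dphi k l.
pose Pg : grid R := fun i j => psi i j * gb i j * qh i j * dphi i j.
pose Kg : grid R := fun i j => Ax psi i j * Dx dx phih i j * Dx dx dphi i j
                         + Ay psi i j * Dy dy phih i j * Dy dy dphi i j.
have eF : F n.+1 - F n = dx * dy * Tsum Nx Ny (fun i j =>
      dt * Pg i j + dt * K * Kg i j + dt * rdf dx dy psi wB dphi i j).
  rewrite /F /energy -mulrBr; congr (_ * _).
  rewrite /Tsum -sumrB; apply: eq_big_nat => i hi; rewrite -sumrB.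
  apply: eq_big_nat => j hj.
  have hq : q n.+1 i j = q n i j + gb i j * (phi n.+1 i j - phi n i j).
    by rewrite -H3 //; ring.
  rewrite /Pg /Kg /rdf /Bsharp /bdens.
  move: `|Dx dx psi i.-1 j| `|Dx dx psi i j| `|Dy dy psi i j.-1| `|Dy dy psi i j| => a1 a2 a3 a4.
  rewrite /qh /dphi /wB /phih /Ax /Ay /Dx /Dy /= hq.
  move: (gb i j) => g.
  match goal with |- ?a = ?b => change (@eq R a b) end.
  by field; rewrite dt0 dx0 dy0.
have eK : Tsum Nx Ny Kg = - Tsum Nx Ny (fun i j => Dh dx dy psi phih i j * dphi i j).
  by rewrite (sbp Nx Ny dx dy psi phih dphi f0 fN f0' fN') opprK.
have eR : Tsum Nx Ny (rdf dx dy psi wB dphi)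
    = Tsum Nx Ny (fun i j => Bop dx dy psi wB i j * dphi i j).
  by rewrite (rd Nx Ny dx dy psi wB dphi p0 pN p0' pN').
have eM : Tsum Nx Ny (fun i j => mu i j * dphi i j) =
    Tsum Nx Ny Pg - K * Tsum Nx Ny (fun i j => Dh dx dy psi phih i j * dphi i j)
    + Tsum Nx Ny (fun i j => Bop dx dy psi wB i j * dphi i j)
    + Tsum Nx Ny (fun i j => Bop dx dy psi Gd i j * dphi i j).
  rewrite -TZ -TB -!TD; apply: T_ext => i j hi hj.
  rewrite H2 // (BopD dx dy psi wB Gd) /Pg.
  match goal with |- ?a = ?b => change (@eq R a b) end.
  ring.
have eG : Tsum Nx Ny (fun i j => Bop dx dy psi Gd i j * dphi i j) =
    \sum_(1 <= i < Nx.+1) \sum_(1 <= j < Ny.+1)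
          (Gamma^-1 / 2 *
            (`|Dx dx psi i.-1 j| * (Ax dphi i.-1 j) ^+ 2
             + `|Dx dx psi i j| * (Ax dphi i j) ^+ 2
             + `|Dy dy psi i j.-1| * (Ay dphi i j.-1) ^+ 2
             + `|Dy dy psi i j| * (Ay dphi i j) ^+ 2)).
  rewrite (rd Nx Ny dx dy psi Gd dphi p0 pN p0' pN') /Tsum.
  apply: eq_big_nat => i _; apply: eq_big_nat => j _.
  rewrite /rdf /Gd /Ax /Ay /=.
  match goal with |- ?a = ?b => change (@eq R a b) end.
  by field; apply/eqP => e; rewrite e ltxx in hG.
have eH : Tsum Nx Ny (fun i j => mu i j * dphi i j) =
    Tsum Nx Ny (fun i j => Dh dx dy psiM chimu i j * chimu i j)
    - Tsum Nx Ny (fun i j => mu i j * chi i j * Bop dx dy psi h3 i j).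
  rewrite -TB; apply: T_ext => i j hi hj; rewrite H1 // /chimu.
  match goal with |- ?a = ?b => change (@eq R a b) end.
  ring.
have eC := sbp Nx Ny dx dy psiM chimu chimu c0 cN c0' cN'.
have eD : (\sum_(0 <= i < Nx.+1) \sum_(1 <= j < Ny.+1)
                       Ax psiM i j * (Dx dx chimu i j) ^+ 2
                    + \sum_(1 <= i < Nx.+1) \sum_(0 <= j < Ny.+1)
                       Ay psiM i j * (Dy dy chimu i j) ^+ 2) =
   Tsum Nx Ny (fun i j => Ax psiM i j * Dx dx chimu i j * Dx dx chimu i j
                         + Ay psiM i j * Dy dy chimu i j * Dy dy chimu i j).
  rewrite TD /Tsum big_ltn // big1 ?add0r; last by move=> j _; rewrite c0 expr2 !mulr0.
  congr (_ + _); apply: eq_bigr => i _.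
    by apply: eq_bigr => j _; rewrite expr2 mulrA.
  rewrite big_ltn // c0' expr2 !mulr0 add0r.
  by apply: eq_bigr => j _; rewrite expr2 mulrA.
pose DMT := Tsum Nx Ny (fun i j => Ax psiM i j * Dx dx chimu i j * Dx dx chimu i j
                         + Ay psiM i j * Dy dy chimu i j * Dy dy chimu i j).
pose GT := \sum_(1 <= i < Nx.+1) \sum_(1 <= j < Ny.+1)
          (Gamma^-1 / 2 *
            (`|Dx dx psi i.-1 j| * (Ax dphi i.-1 j) ^+ 2
             + `|Dx dx psi i j| * (Ax dphi i j) ^+ 2
             + `|Dy dy psi i j.-1| * (Ay dphi i j.-1) ^+ 2
             + `|Dy dy psi i j| * (Ay dphi i j) ^+ 2)).
pose HT := Tsum Nx Ny (fun i j => mu i j * chi i j * Bop dx dy psi h3 i j).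
have eFin : F n.+1 - F n = dx * dy * dt * (- DMT - GT - HT).
  rewrite eF TD TD !TZ eK eR.
  have E : Tsum Nx Ny Pg - K * Tsum Nx Ny (fun i j => Dh dx dy psi phih i j * dphi i j)
      + Tsum Nx Ny (fun i j => Bop dx dy psi wB i j * dphi i j) = - DMT - GT - HT.
    move: eM; rewrite eH eC eG -/DMT -/GT -/HT => eM.
    apply: (addIr GT); rewrite -eM.
    match goal with |- ?a = ?b => change (@eq R a b) end.
    ring.
  rewrite -E.
  match goal with |- ?a = ?b => change (@eq R a b) end.
  ring.
split.
  rewrite eD -/DMT -/GT.
  rewrite -[\sum_(1 <= i < Nx.+1) \sum_(1 <= j < Ny.+1) mu i j * chi i j * Bop dx dy psi h3 i j]/HT.
  rewrite eFin.
  match goal with |- ?a = ?b => change (@eq R a b) end.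
  by field.
move=> hz.
have HT0 : HT = 0.
  rewrite /HT /Tsum big1 // => i _; rewrite big1 // => j _.
  rewrite /Bop /Ax /Ay !hz.
  match goal with |- ?a = ?b => change (@eq R a b) end.
  ring.
have hAx : forall i j, 0 <= Ax psiM i j.
  by move=> i j; rewrite /Ax divr_ge0 // addr_ge0 // ltW // mulr_gt0.
have hAy : forall i j, 0 <= Ay psiM i j.
  by move=> i j; rewrite /Ay divr_ge0 // addr_ge0 // ltW // mulr_gt0.
have DMge : 0 <= DMT.
  rewrite /DMT /Tsum; apply: sumr_ge0 => i _; apply: sumr_ge0 => j _.
  by apply: addr_ge0; rewrite -mulrA mulr_ge0 // -expr2 sqr_ge0.
have GTge : 0 <= GT.
  rewrite /GT; apply: sumr_ge0 => i _; apply: sumr_ge0 => j _.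
  apply: mulr_ge0; first by rewrite divr_ge0 // invr_ge0 ltW.
  by rewrite !addr_ge0 // mulr_ge0 // sqr_ge0.
rewrite -subr_le0 eFin HT0.
apply: mulr_ge0_le0.
  by rewrite !mulr_ge0 // ltW.
by rewrite subr0 -opprD oppr_le0 addr_ge0.
Qed.
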